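(* Let $M\in\mathbb{R}^{n\times n}$ be real symmetric with spectral decomposition $M=\sum_{i=1}^n\lambda_iu_iu_i^T$, $\lambda_1>\cdots>\lambda_n$ distinct, $u_i$ orthonormal. Let $p\in(0,1)$, let $Q$ be the random symmetric matrix with independent entries $Q_{ij}$ ($i\le j$) equal to $1/p$ with probability $p$ and $0$ otherwise, and $E=M\circ Q-M$. Let $R=\sum_{j\ne1}\frac{1}{\lambda_j-\lambda_1}u_ju_j^T$ be the reduced resolvent of $M$ associated with $u_1$. Let $w_1=u_1\circ u_1$, $\mathcal{M}=M\circ M$, and let $M_k$ denote the $k$-th column of $M$. Then $$\mathbb{E}\big[\|REu_1\|_2^2\big]\le\frac{1}{(\lambda_2-\lambda_1)^2}\,\frac{1-p}{p}\Big(\sum_{k=1}^nu_1(k)^2\|M_k\|_2^2-\Big[2w_1^T\mathcal{M}w_1-\sum_{k=1}^nw_1(k)^2\mathcal{M}_{kk}\Big]\Big).$$ Moreover, if $\lambda_1=\|M\|_2$, then $$\mathbb{E}\big[\|REu_1\|_2^2\big]\le\frac{1}{(1-\lambda_2/\lambda_1)^2}\|u_1\|_\infty^2\frac{\mathrm{NumRank}(M)}{p},$$ where $\mathrm{NumRank}(M)=\|M\|_F^2/\|M\|_2^2$.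
   Context: $\circ$ is the Hadamard product, $\|\cdot\|_F$ the Frobenius norm, $\|\cdot\|_2$ the spectral (resp. Euclidean) norm, $\|x\|_\infty=\max_i|x_i|$. *)

(* Defs.v *)
From HB Require Import structures.
From mathcomp Require Import all_boot all_order all_algebra.
From mathcomp Require Import classical_sets reals.
Set Implicit Arguments. Unset Strict Implicit. Unset Printing Implicit Defensive.
Import Order.TTheory GRing.Theory Num.Theory.
Local Open Scope ring_scope.
Local Open Scope classical_set_scope.

Section Defs.
Variable R : realType.

Definition hadamard m n (A B : 'M[R]_(m, n)) : 'M[R]_(m, n) :=
  \matrix_(i, j) (A i j * B i j).

Definition vnorm2 n (x : 'cV[R]_n) : R := \sum_i (x i 0) ^+ 2.

Definition frob2 m n (A : 'M[R]_(m, n)) : R := \sum_i \sum_j (A i j) ^+ 2.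

Definition spec_norm m n (A : 'M[R]_(m, n)) : R :=
  sup [set Num.sqrt (vnorm2 (A *m x)) | x in [set x : 'cV[R]_n | vnorm2 x = 1]].

Definition vnorm_inf n (x : 'cV[R]_n) : R := \big[Num.max/0]_i `|x i 0|.

Definition NumRank n (A : 'M[R]_n) : R := frob2 A / (spec_norm A) ^+ 2.

(* The random symmetric matrix Q, given a Bernoulli pattern b on pairs (i,j)
   with i <= j: Q_ij = Q_ji = 1/p if b(min,max) else 0. *)
Definition Qmat n (p : R) (b : {ffun 'I_n * 'I_n -> bool}) : 'M[R]_n :=
  \matrix_(i, j) (if b (if (i <= j)%N then (i, j) else (j, i)) then p^-1 else 0).

(* Expectation of f(Q) where the entries Q_ij, i <= j, are independent,
   equal to 1/p with probability p and 0 otherwise. *)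
Definition EQ n (p : R) (f : 'M[R]_n -> R) : R :=
  \sum_(b : {ffun 'I_n * 'I_n -> bool} |
          [forall ij : 'I_n * 'I_n, (ij.2 < ij.1)%N ==> ~~ b ij])
    (\prod_(ij : 'I_n * 'I_n | (ij.1 <= ij.2)%N) (if b ij then p else 1 - p))
    * f (Qmat p b).

End Defs.

(* Main.v *)
Require Import Defs.
From HB Require Import structures.
From mathcomp Require Import all_boot all_order all_algebra.
From mathcomp Require Import classical_sets reals.
From mathcomp Require Import ring lra zify.
From mathcomp Require Import boolp.
Import Order.TTheory GRing.Theory Num.Theory.
Set Implicit Arguments. Unset Strict Implicit. Unset Printing Implicit Defensive.
Local Open Scope ring_scope.

Definition Eb (R : realType) n (p : R) (h : {ffun 'I_n * 'I_n -> bool} -> R) : R :=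
  \sum_(b : {ffun 'I_n * 'I_n -> bool} |
          [forall ij : 'I_n * 'I_n, (ij.2 < ij.1)%N ==> ~~ b ij])
    (\prod_(ij : 'I_n * 'I_n | (ij.1 <= ij.2)%N) (if b ij then p else 1 - p))
    * h b.
Arguments Eb {R n}.

Lemma EQ_Eb (R : realType) (n : nat) (p : R) (f : 'M[R]_n -> R) : EQ p f = Eb p (fun b => f (Qmat p b)).
Proof. by []. Qed.

Lemma Eb_add (R : realType) n (p : R) (h1 h2 : {ffun 'I_n * 'I_n -> bool} -> R) :
  Eb p (fun b => h1 b + h2 b) = Eb p h1 + Eb p h2.
Proof. by rewrite /Eb -big_split; apply: eq_bigr => b _; rewrite mulrDr. Qed.

Lemma Eb_scale (R : realType) n (p : R) c (h : {ffun 'I_n * 'I_n -> bool} -> R) :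
  Eb p (fun b => c * h b) = c * Eb p h.
Proof. by rewrite /Eb mulr_sumr; apply: eq_bigr => b _; rewrite mulrCA. Qed.

Lemma Eb_opp (R : realType) n (p : R) (h : {ffun 'I_n * 'I_n -> bool} -> R) :
  Eb p (fun b => - h b) = - Eb p h.
Proof. by rewrite /Eb -sumrN; apply: eq_bigr => b _; rewrite mulrN. Qed.

Lemma Eb_sum (R : realType) n (p : R) (I : finType) (P : pred I)
   (h : I -> {ffun 'I_n * 'I_n -> bool} -> R) :
  Eb p (fun b => \sum_(i | P i) h i b) = \sum_(i | P i) Eb p (h i).
Proof.
rewrite /Eb; under eq_bigr do rewrite mulr_sumr.
by rewrite exchange_big. Qed.

Lemma Eb_le (R : realType) n (p : R) (h1 h2 : {ffun 'I_n * 'I_n -> bool} -> R) :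
  0 <= p <= 1 -> (forall b, h1 b <= h2 b) -> Eb p h1 <= Eb p h2.
Proof.
move=> /andP[p0 p1] H; apply: ler_sum => b _; apply: ler_wpM2l => //.
apply: prodr_ge0 => ij _; case: (b ij) => //; by rewrite subr_ge0.
Qed.

Lemma Eb_prod (R : realType) n (p : R) (phi : 'I_n * 'I_n -> bool -> R) :
  Eb p (fun b => \prod_(ij : 'I_n * 'I_n | (ij.1 <= ij.2)%N) phi ij (b ij)) =
  \prod_(ij : 'I_n * 'I_n | (ij.1 <= ij.2)%N) (p * phi ij true + (1 - p) * phi ij false).
Proof.
rewrite /Eb.
have -> : \prod_(ij : 'I_n * 'I_n | (ij.1 <= ij.2)%N) (p * phi ij true + (1 - p) * phi ij false)
  = \prod_(ij : 'I_n * 'I_n | (ij.1 <= ij.2)%N) \sum_(x : bool | predT x)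
       ((if x then p else 1 - p) * phi ij x).
  by apply: eq_bigr => ij _; rewrite big_bool.
rewrite (big_distr_big_dep false); apply: eq_big => [b|b _].
  apply/idP/pfamilyP.
    move=> /forallP H; split.
      apply/fintype.subsetP => ij; rewrite !inE; move: (H ij); case: (b ij) => //=.
      by rewrite implybF -leqNgt.
    by [].
  move=> [/fintype.subsetP H _]; apply/forallP => ij; apply/implyP => lt.
  apply/negP => bij; have := H ij; rewrite !inE bij => /(_ isT).
  by rewrite unfold_in /= leqNgt lt.
by rewrite -big_split.
Qed.

Definition gD (R : realType) (p : R) (x : bool) : R := (if x then p^-1 else 0) - 1.

Lemma prod_if1 (R : realType) (I : finType) (P : pred I) (t : I) (F : I -> R) :
  P t -> \prod_(s | P s) (if s == t then F s else 1) = F t.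
Proof.
by move=> Pt; rewrite (bigD1 t) //= eqxx big1 ?mulr1 // => s /andP[_ /negbTE ->].
Qed.

Lemma Eb_const (R : realType) n (p : R) c :
  Eb p (fun _ : {ffun 'I_n * 'I_n -> bool} => c) = c.
Proof.
have E : Eb p (fun _ : {ffun 'I_n * 'I_n -> bool} => (1:R)) = 1.
  have := Eb_prod (n:=n) p (fun _ _ => 1).
  rewrite big1_eq => ->; rewrite big1 // => ij _; by rewrite !mulr1 addrC subrK.
rewrite -[X in _ = X]mulr1 -E -Eb_scale; congr Eb; apply: funext => b; by rewrite mulr1.
Qed.

Lemma Eb_DD (R : realType) n (p : R) (t1 t2 : 'I_n * 'I_n) :
  0 < p -> (t1.1 <= t1.2)%N -> (t2.1 <= t2.2)%N ->
  Eb p (fun b => gD p (b t1) * gD p (b t2)) = if t1 == t2 then (1 - p) / p else 0.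
Proof.
move=> p0 S1 S2.
have pn0 : p != 0 by rewrite gt_eqF.
have -> : (fun b : {ffun 'I_n * 'I_n -> bool} => gD p (b t1) * gD p (b t2)) =
  (fun b => \prod_(s : 'I_n * 'I_n | (s.1 <= s.2)%N)
     ((if s == t1 then gD p (b s) else 1) * (if s == t2 then gD p (b s) else 1))).
  apply: funext => b; rewrite big_split /=.
  by rewrite !prod_if1.
rewrite (Eb_prod p (fun s x => (if s == t1 then gD p x else 1) * (if s == t2 then gD p x else 1))) /=; case: eqVneq => [<-|neq].
  rewrite (bigD1 t1) //= eqxx big1 => [|s /andP[_ /negbTE ->]]; last first.
    by rewrite !mulr1 addrC subrK.
  rewrite mulr1 /gD /=; field; done.
rewrite (bigD1 t1) //= eqxx (negbTE neq) /gD /=.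
have -> : p * ((p^-1 - 1) * 1) + (1 - p) * ((0 - 1) * 1) = 0 by field; done.
by rewrite mul0r.
Qed.
Lemma vnorm2E (R : realType) N (x : 'cV[R]_N) : vnorm2 x = (x^T *m x) 0 0.
Proof. by rewrite /vnorm2 !mxE; apply: eq_bigr => i _; rewrite !mxE expr2. Qed.

Lemma sum_rank1 (R : realType) N (U : 'M[R]_N) (P : pred 'I_N) (d : 'I_N -> R) :
  \sum_(j | P j) d j *: (col j U *m (col j U)^T) =
  U *m diag_mx (\row_j (if P j then d j else 0)) *m U^T.
Proof.
apply/matrixP => a b; rewrite summxE mul_mx_diag !mxE big_mkcond /=.
apply: eq_bigr => j _; rewrite !mxE big_ord1 !mxE.
by case: (P j); rewrite ?mulr0 ?mul0r // mulrA [d j * _]mulrC.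
Qed.

Lemma quad_diag (R : realType) N (z : 'cV[R]_N) (e : 'rV[R]_N) :
  (z^T *m diag_mx e *m z) 0 0 = \sum_j e 0 j * z j 0 ^+ 2.
Proof.
by rewrite mul_mx_diag !mxE; apply: eq_bigr => j _; rewrite !mxE; ring.
Qed.

Lemma resolvent_bound (R : realType) N (U : 'M[R]_N) (d : 'I_N -> R) (i0 : 'I_N)
   (c : R) (y : 'cV[R]_N) :
  U^T *m U = 1%:M -> (forall j, j != i0 -> d j ^+ 2 <= c) ->
  vnorm2 ((\sum_(j | j != i0) d j *: (col j U *m (col j U)^T)) *m y)
   <= c * (vnorm2 y - ((col i0 U)^T *m y) 0 0 ^+ 2).
Proof.
move=> UU Hd; have UU' : U *m U^T = 1%:M by apply: mulmx1C.
rewrite sum_rank1.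
set e := \row_j (if j != i0 then d j else 0).
set z := U^T *m y.
have -> : vnorm2 (U *m diag_mx e *m U^T *m y) = (z^T *m diag_mx (\row_j (e 0 j * e 0 j)) *m z) 0 0.
  rewrite vnorm2E -mulmx_diag !trmx_mul !trmxK tr_diag_mx /z !mulmxA -(mulmxA _ U^T U) UU mulmx1. reflexivity.
have -> : vnorm2 y = (z^T *m z) 0 0.
  by rewrite vnorm2E /z trmx_mul trmxK mulmxA -(mulmxA y^T) UU' mulmx1.
have -> : ((col i0 U)^T *m y) 0 0 = z i0 0.
  by rewrite tr_col -row_mul mxE.
rewrite quad_diag -vnorm2E /vnorm2 (bigD1 i0) //= [X in _ <= c * (X - _)](bigD1 i0) //=.
rewrite /e !mxE eqxx /= mul0r mul0r add0r [X in c * X]addrC addKr mulr_sumr.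
apply: ler_sum => j nj; rewrite !mxE nj -expr2; apply: ler_wpM2r; first exact: sqr_ge0.
exact: Hd.
Qed.

Definition key {n} (i k : 'I_n) : 'I_n * 'I_n := if (i <= k)%N then (i, k) else (k, i).

Lemma key_eq n (i k j l : 'I_n) :
  (key i k == key j l) = ((j == i) && (l == k)) || ((j == k) && (l == i)).
Proof.
move: i k j l => [i Hi] [k Hk] [j Hj] [l Hl]; rewrite /key /=.
case: (leqP i k) => H1; case: (leqP j l) => H2; rewrite xpair_eqE -!val_eqE /=;
  apply/idP/idP; lia.
Qed.

Lemma key_eq_r n (i k l : 'I_n) : (key i k == key i l) = (l == k).
Proof.
rewrite key_eq eqxx /=; case: (eqVneq l k) => //= ne; apply/negbTE/negP => /andP[/eqP ik /eqP li].
by rewrite li ik eqxx in ne.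
Qed.

Lemma key_S n (i k : 'I_n) : ((key i k).1 <= (key i k).2)%N.
Proof. rewrite /key; case: (leqP i k) => //= H; exact: ltnW. Qed.

Definition Dl (R : realType) n (p : R) (b : {ffun 'I_n * 'I_n -> bool}) (i k : 'I_n) : R :=
  gD p (b (key i k)).

Lemma Qmat_Dl (R : realType) n (p : R) b (i k : 'I_n) : Qmat p b i k = Dl p b i k + 1.
Proof. by rewrite /Dl /gD /Qmat mxE /key subrK. Qed.

Lemma EDD (R : realType) n (p : R) (i k j l : 'I_n) : 0 < p ->
  Eb p (fun b => Dl p b i k * Dl p b j l) = if key i k == key j l then (1 - p) / p else 0.
Proof. by move=> p0; rewrite /Dl Eb_DD // key_S. Qed.

Lemma sum_pt (R : realType) n (F : 'I_n -> R) (k : 'I_n) (v : R) :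
  \sum_l F l * (if l == k then v else 0) = F k * v.
Proof.
rewrite (bigD1 k) //= eqxx big1 ?addr0 // => l nl; by rewrite (negbTE nl) mulr0.
Qed.

Lemma sum2_pt (R : realType) n (F : 'I_n -> 'I_n -> R) (a c : 'I_n) (v : R) :
  \sum_j \sum_l F j l * (if (j == a) && (l == c) then v else 0) = F a c * v.
Proof.
rewrite (bigD1 a) //= [X in _ + X]big1 ?addr0 => [|j nj]; last first.
  by apply: big1 => l _; rewrite (negbTE nj) mulr0.
by rewrite eqxx /= sum_pt.
Qed.

Lemma EY_gen (R : realType) n (p : R) (a : 'I_n -> 'I_n -> R) : 0 < p ->
  Eb p (fun b => \sum_i (\sum_k a i k * Dl p b i k) ^+ 2) =
  (1 - p) / p * \sum_i \sum_k a i k ^+ 2.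
Proof.
move=> p0.
transitivity (Eb p (fun b => \sum_i \sum_k \sum_l (a i k * a i l) * (Dl p b i k * Dl p b i l))).
  congr Eb; apply: funext => b; apply: eq_bigr => i _.
  rewrite expr2 mulr_suml; apply: eq_bigr => k _; rewrite mulr_sumr.
  by apply: eq_bigr => l _; ring.
rewrite Eb_sum mulr_sumr; apply: eq_bigr => i _.
rewrite Eb_sum mulr_sumr; apply: eq_bigr => k _.
rewrite Eb_sum.
under eq_bigr => l _ do rewrite Eb_scale EDD // key_eq_r.
by rewrite sum_pt; ring.
Qed.

Lemma EZ_gen (R : realType) n (p : R) (a : 'I_n -> 'I_n -> R) : 0 < p ->
  Eb p (fun b => (\sum_i \sum_k a i k * Dl p b i k) ^+ 2) =
  (1 - p) / p * \sum_i \sum_k a i k * (a i k + if i == k then 0 else a k i).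
Proof.
move=> p0.
transitivity (Eb p (fun b => \sum_i \sum_k \sum_j \sum_l
    (a i k * a j l) * (Dl p b i k * Dl p b j l))).
  congr Eb; apply: funext => b.
  rewrite expr2 mulr_suml; apply: eq_bigr => i _.
  rewrite mulr_suml; apply: eq_bigr => k _; rewrite mulr_sumr.
  apply: eq_bigr => j _; rewrite mulr_sumr.
  by apply: eq_bigr => l _; ring.
rewrite Eb_sum mulr_sumr; apply: eq_bigr => i _.
rewrite Eb_sum mulr_sumr; apply: eq_bigr => k _.
rewrite Eb_sum.
under eq_bigr => j _ do rewrite Eb_sum.
under eq_bigr => j _ do under eq_bigr => l _ do rewrite Eb_scale EDD // key_eq.
case: (eqVneq i k) => [<-|nik].
  under eq_bigr => j _ do under eq_bigr => l _ do rewrite orbb.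
  rewrite (sum2_pt (fun j l => a i i * a j l)); ring.
have H : forall j l : 'I_n, (if ((j == i) && (l == k)) || ((j == k) && (l == i)) then (1 - p) / p else 0)
   = (if (j == i) && (l == k) then (1 - p) / p else 0) + (if (j == k) && (l == i) then (1 - p) / p else 0).
  move=> j l; case: (eqVneq j i) => [->|] /=; case: (eqVneq l k) => [->|] //=;
    rewrite ?(negbTE nik) ?addr0 ?add0r //; case: (_ && _); rewrite ?addr0 ?add0r.
under eq_bigr => j _ do under eq_bigr => l _ do rewrite H mulrDr.
under eq_bigr => j _ do rewrite big_split.
rewrite big_split /= (sum2_pt (fun j l => a i k * a j l)) (sum2_pt (fun j l => a i k * a j l)).
ring.
Qed.

Lemma spec_ge (R : realType) N (M : 'M[R]_N) (x : 'cV[R]_N) :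
  vnorm2 x = 1 -> Num.sqrt (vnorm2 (M *m x)) <= spec_norm M.
Proof.
move=> hx; apply: sup_upper_bound; last by exists x.
split; first by exists (Num.sqrt (vnorm2 (M *m x))), x.
exists (Num.sqrt (\sum_i (\sum_j `|M i j|) ^+ 2)) => r [y hy <-].
apply: ler_wsqrtr; apply: ler_sum => i _.
have hyj : forall j, `|y j 0| <= 1.
  move=> j; have : y j 0 ^+ 2 <= 1.
    rewrite -hy /vnorm2 (bigD1 j) //= lerDl; apply: sumr_ge0 => k _; exact: sqr_ge0.
  move=> h; rewrite ler_norml; apply/andP; split; nra.
have : `|(M *m y) i 0| <= \sum_j `|M i j|.
  rewrite mxE; apply: le_trans (ler_norm_sum _ _ _) _; apply: ler_sum => j _.
  rewrite normrM -[leRHS]mulr1; apply: ler_wpM2l => //.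
rewrite ler_norml => /andP[h1 h2]; nra.
Qed.

Lemma vnorm2Z (R : realType) N (a : R) (x : 'cV[R]_N) : vnorm2 (a *: x) = a ^+ 2 * vnorm2 x.
Proof. by rewrite /vnorm2 mulr_sumr; apply: eq_bigr => i _; rewrite mxE exprMn. Qed.

Lemma vnorm2_ge0 (R : realType) N (x : 'cV[R]_N) : 0 <= vnorm2 x.
Proof. by apply: sumr_ge0 => i _; exact: sqr_ge0. Qed.

Unset Implicit Arguments.
Set Strict Implicit.

Theorem theorem4 (R : realType) (n : nat) (M U : 'M[R]_n.+2) (lam : 'I_n.+2 -> R)
    (p : R) :
  M^T = M ->
  U^T *m U = 1%:M ->
  (forall i j : 'I_n.+2, (i < j)%N -> lam j < lam i) ->
  M = \sum_i lam i *: (col i U *m (col i U)^T) ->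
  0 < p < 1 ->
  let u1 := col 0 U in
  let lam1 := lam 0 in
  let lam2 := lam 1 in
  let Rres := \sum_(j | j != 0) (lam j - lam1)^-1 *: (col j U *m (col j U)^T) in
  let E := fun Q : 'M[R]_n.+2 => hadamard M Q - M in
  let w1 := hadamard u1 u1 in
  let MM := hadamard M M in
  let lhs := EQ p (fun Q => vnorm2 (Rres *m (E Q *m u1))) in
  lhs <= ((lam2 - lam1) ^+ 2)^-1 * ((1 - p) / p) *
         (\sum_k (u1 k 0) ^+ 2 * vnorm2 (col k M)
          - (2 * (w1^T *m MM *m w1) 0 0 - \sum_k (w1 k 0) ^+ 2 * MM k k))
  /\ (lam1 = spec_norm M ->
      lhs <= ((1 - lam2 / lam1) ^+ 2)^-1 * (vnorm_inf u1) ^+ 2 * (NumRank M / p)).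
Proof.
move=> MT UU lamdec Mdec /andP[p0 p1] u1 lam1 lam2 Rres E w1 MM lhs.
have pn0 : p != 0 by rewrite gt_eqF.
have hp : 0 <= p <= 1 by apply/andP; split; apply: ltW.
have l10 : lam 1 < lam 0 by apply: lamdec.
have lj1 : forall j : 'I_n.+2, j != 0 -> lam j <= lam 1.
  move=> j nj; case: (eqVneq j 1) => [->|nj1] //; apply/ltW/lamdec.
  have v1 : (1 %% n.+2)%N = 1%N by []. move: nj nj1; rewrite -!val_eqE /= v1; lia.
pose a1 := fun i k : 'I_n.+2 => M i k * U k 0.
pose a2 := fun i k : 'I_n.+2 => U i 0 * M i k * U k 0.
have Ey : forall b, E (Qmat p b) *m u1 = \col_i \sum_k a1 i k * Dl p b i k.
  move=> b; apply/matrixP => i j; rewrite !mxE (ord1 j); apply: eq_bigr => k _.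
  rewrite !mxE /a1 /Dl /gD /key; ring.
have key1 : forall b, vnorm2 (E (Qmat p b) *m u1) = \sum_i (\sum_k a1 i k * Dl p b i k) ^+ 2.
  by move=> b; rewrite Ey /vnorm2; apply: eq_bigr => i _; rewrite mxE.
have key2 : forall b, (u1^T *m (E (Qmat p b) *m u1)) 0 0 = \sum_i \sum_k a2 i k * Dl p b i k.
  move=> b; rewrite Ey mxE; apply: eq_bigr => i _; rewrite !mxE mulr_sumr.
  by apply: eq_bigr => k _; rewrite /a1 /a2; ring.
have hc : forall j : 'I_n.+2, j != 0 -> ((lam j - lam1)^-1) ^+ 2 <= ((lam2 - lam1) ^+ 2)^-1.
  move=> j nj; rewrite exprVn; have := lj1 j nj => h.
  rewrite /lam1 /lam2 lef_pV2 ?posrE; nra.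
have Hbound : lhs <= ((lam2 - lam1) ^+ 2)^-1 *
    (Eb p (fun b => \sum_i (\sum_k a1 i k * Dl p b i k) ^+ 2)
     - Eb p (fun b => (\sum_i \sum_k a2 i k * Dl p b i k) ^+ 2)).
  rewrite /lhs EQ_Eb -Eb_opp -Eb_add -Eb_scale; apply: Eb_le => // b /=.
  rewrite -key1 -key2 /Rres /u1.
  exact: (@resolvent_bound R n.+2 U (fun j => (lam j - lam1)^-1) 0).
have A_eq : \sum_i \sum_k a1 i k ^+ 2 = \sum_k (u1 k 0) ^+ 2 * vnorm2 (col k M).
  rewrite exchange_big; apply: eq_bigr => k _; rewrite /vnorm2 mulr_sumr.
  by apply: eq_bigr => i _; rewrite !mxE /a1; ring.
have Msym : forall i k, M k i = M i k by move=> i k; rewrite -{1}MT mxE.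
have B_eq : \sum_i \sum_k a2 i k * (a2 i k + if i == k then 0 else a2 k i) =
    2 * (w1^T *m MM *m w1) 0 0 - \sum_k (w1 k 0) ^+ 2 * MM k k.
  have -> : (w1^T *m MM *m w1) 0 0 = \sum_i \sum_k a2 i k ^+ 2.
    rewrite mxE; under eq_bigr => k _ do rewrite mxE mulr_suml.
    rewrite exchange_big; apply: eq_bigr => i _; apply: eq_bigr => k _.
    by rewrite !mxE /a2; ring.
  rewrite (eq_bigr (fun i => 2 * \sum_k a2 i k ^+ 2 - a2 i i ^+ 2)); last first.
    move=> i _.
    transitivity (\sum_k (2 * a2 i k ^+ 2 - (if i == k then a2 i k ^+ 2 else 0))).
      apply: eq_bigr => k _; case: eqVneq => [<-|_]; rewrite /a2 ?(Msym i k); ring.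
    rewrite sumrB -mulr_sumr; congr (_ - _).
    rewrite (bigD1 i) //= eqxx big1 ?addr0 // => k nk; by rewrite eq_sym (negbTE nk).
  rewrite sumrB -mulr_sumr; congr (_ - _); apply: eq_bigr => k _.
  by rewrite !mxE /a2; ring.
split.
  apply: le_trans Hbound _; rewrite EY_gen // EZ_gen // A_eq B_eq.
  by rewrite -mulrBr mulrA.
move=> hspec.
have l0n0 : lam1 != 0.
  apply/negP => /eqP l0.
  have hx : vnorm2 (col 1 U) = 1.
    rewrite /vnorm2; transitivity ((U^T *m U) 1 1); last by rewrite UU mxE eqxx.
    by rewrite mxE; apply: eq_bigr => k _; rewrite !mxE expr2.
  have hMx : M *m col 1 U = lam 1 *: col 1 U.
    rewrite Mdec sum_rank1 colE -!mulmxA (mulmxA U^T) UU mul1mx scalemxAr.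
    congr (_ *m _); apply/matrixP => i j; rewrite mul_diag_mx !mxE /=.
    case: (eqVneq i 1) => [->|ni] /=; first by [].
    by rewrite mulr0 mulr0.
  have := spec_ge M hx; rewrite hMx -hspec l0 vnorm2Z hx mulr1 sqrtr_sqr normr_le0.
  move=> /eqP h1; move: l10; rewrite h1 -/lam1 l0 ltxx //.
apply: le_trans Hbound _.
have EZ0 : 0 <= Eb p (fun b => (\sum_i \sum_k a2 i k * Dl p b i k) ^+ 2).
  have := @Eb_le R n.+2 p (fun _ => 0) (fun b => (\sum_i \sum_k a2 i k * Dl p b i k) ^+ 2) hp
     (fun b => sqr_ge0 _).
  by rewrite Eb_const.
have c0 : 0 <= ((lam2 - lam1) ^+ 2)^-1 by rewrite invr_ge0 sqr_ge0.
apply: le_trans (_ : _ <= ((lam2 - lam1) ^+ 2)^-1 *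
    Eb p (fun b => \sum_i (\sum_k a1 i k * Dl p b i k) ^+ 2)) _.
  by apply: ler_wpM2l => //; rewrite gerBl.
rewrite EY_gen // A_eq.
have Ale : \sum_k (u1 k 0) ^+ 2 * vnorm2 (col k M) <= vnorm_inf u1 ^+ 2 * frob2 M.
  rewrite /frob2 exchange_big mulr_sumr; apply: ler_sum => k _.
  have -> : \sum_i M i k ^+ 2 = vnorm2 (col k M).
    by apply: eq_bigr => i _; rewrite mxE.
  apply: ler_wpM2r; first exact: vnorm2_ge0.
  have : `|u1 k 0| <= vnorm_inf u1 by apply: (le_bigmax 0 (fun i => `|u1 i 0|)).
  have := normr_ge0 (u1 k 0); rewrite ler_norml; nra.
have A0 : 0 <= \sum_k (u1 k 0) ^+ 2 * vnorm2 (col k M).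
  by apply: sumr_ge0 => k _; apply: mulr_ge0; [exact: sqr_ge0 | exact: vnorm2_ge0].
have v1 : (1 - p) / p <= p^-1.
  by rewrite -[leRHS]mul1r; apply: ler_wpM2r; [rewrite invr_ge0 ltW | lra].
apply: le_trans (_ : _ <= ((lam2 - lam1) ^+ 2)^-1 * (p^-1 * (vnorm_inf u1 ^+ 2 * frob2 M))) _.
  apply: ler_wpM2l => //; apply: ler_pM => //.
  by apply: divr_ge0; [lra | exact: ltW].
rewrite /NumRank -hspec le_eqVlt; apply/orP; left; apply/eqP.
have l21 : lam2 - lam1 != 0 by rewrite subr_eq0 lt_eqF.
field.
rewrite pn0 l0n0 l21 /=; by rewrite subr_eq0 gt_eqF.
Qed.
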